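(* Let $\mathcal H\subseteq\mathcal Y^{\mathcal X}$, $S\in\mathcal X^n$. Then $\mathsf{Hall}^{\mathrm{ag}}(G_{\mathrm{ag}}(\mathcal H|_S))$ is the greatest (supremum) $\alpha$ for which $G_{\mathrm{ag}}(\mathcal H|_S)$ is $\alpha$-agnostic-orientable, where orientations may be randomized (fractional).
   Context: For $S=(x_1,\dots,x_n)$ and $v\in\mathcal Y^n$, $\|v-\mathcal H\|_0=\min_{h\in\mathcal H}|\{i:h(x_i)\ne v_i\}|$. The agnostic one-inclusion graph $G_{\mathrm{ag}}(\mathcal H|_S)=(V,E)$ has $V=\mathcal Y^n$ and one edge for each $i\in[n]$ and each labeling $e$ of the coordinates other than $i$, incident to all $v$ agreeing with $e$ off coordinate $i$. A randomized (fractional) orientation assigns each edge a probability distribution over its incident vertices; indegree = total amount received. $G_{\mathrm{ag}}(\mathcal H|_S)$ is $\alpha$-agnostic-orientable if some such orientation gives every vertex $v$ indegree $\ge\alpha-\|v-\mathcal H\|_0$. For $U\subseteq V$, $E[U]$ is the set of edges with an incident node in $U$, and $\mathsf{Hall}^{\mathrm{ag}}(G_{\mathrm{ag}}(\mathcal H|_S))=\inf\big\{\big(|E[U]|+\sum_{u\in U}\|u-\mathcal H\|_0\big)/|U|: U\subseteq V, 0<|U|<\infty\big\}$. *)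

(* Defs.v *)
From HB Require Import structures.
From mathcomp Require Import all_boot all_order all_algebra.
From mathcomp Require Import finmap.
From mathcomp Require Import all_classical all_reals.
From mathcomp Require Import ereal esum.
Set Implicit Arguments. Unset Strict Implicit. Unset Printing Implicit Defensive.
Import Order.TTheory GRing.Theory Num.Theory.
Local Open Scope classical_set_scope.
Local Open Scope ring_scope.
Local Open Scope fset_scope.
Local Open Scope ereal_scope.
Local Open Scope ring_scope.

Section AgnosticOIG.
Variables (R : realType) (X : Type) (Y : choiceType) (n : nat).
Variables (H : set (X -> Y)) (S : 'I_n -> X).

Definition agV := {ffun 'I_n -> Y}.

Definition mismatch (h : X -> Y) (v : agV) : nat :=
  #|[set i : 'I_n | h (S i) != v i]|.

(* ||v - H||_0 = min_{h in H} mismatch, as an extended real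
   (+oo when H is empty, by the convention inf set0 = +oo) *)
Definition agdist (v : agV) : \bar R :=
  ereal_inf [set ((mismatch h v)%:R)%:E | h in H].

Definition agupd (v : agV) (i : 'I_n) (y : Y) : agV :=
  [ffun j => if j == i then y else v j].

(* The edge of direction i containing v is determined by the labeling of
   the coordinates other than i: key i v. *)
Definition edge_key (i : 'I_n) (v : agV) : 'I_n * {ffun 'I_n -> option Y} :=
  (i, [ffun j => if j == i then None else Some (v j)]).

Definition num_edges_touching (U : {fset agV}) : nat :=
  #|` [fset edge_key i v | i in [fset i | i in 'I_n], v in U] |.

Definition hall_ag : \bar R :=
  ereal_inf [set ((((num_edges_touching U)%:R)%:E + \sum_(u <- U) agdist u)
                   * ((#|` U|%:R)^-1)%:E)%E
            | U in [set U : {fset agV} | U != fset0]].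

(* A randomized (fractional) orientation, encoded as o i v = probability mass
   that the direction-i edge through v sends to the incident vertex v.
   The incident vertices of that edge are exactly the agupd v i y, y : Y,
   so the distribution condition is: nonnegative and total mass 1. *)
Definition rand_orientation (o : 'I_n -> agV -> R) : Prop :=
  (forall i v, 0 <= o i v) /\
  (forall i v, \esum_(y in [set: Y]) (o i (agupd v i y))%:E = 1%E).

Definition indegree (o : 'I_n -> agV -> R) (v : agV) : R :=
  \sum_(i < n) o i v.

Definition ag_orientable (alpha : R) : Prop :=
  exists o, rand_orientation o /\
    forall v : agV, (alpha%:E - agdist v <= (indegree o v)%:E)%E.

End AgnosticOIG.

(* Main.v *)
Require Import Defs.
From HB Require Import structures.
From mathcomp Require Import all_boot all_order all_algebra.
From mathcomp Require Import finmap.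
From mathcomp Require Import all_classical all_reals.
From mathcomp Require Import ereal esum topology normedtype.
From mathcomp Require Import ring lra zify.
Set Implicit Arguments. Unset Strict Implicit. Unset Printing Implicit Defensive.
Import Order.TTheory GRing.Theory Num.Theory numFieldNormedType.Exports.
Local Open Scope ring_scope.
Section Flow.
Variables (R : realFieldType) (A B : finType) (adj : A -> B -> bool).

Definition Nb (U : {set B}) : {set A} := [set a | [exists v in U, adj a v]].

Definition flow_ok (SA : {set A}) (SB : {set B}) (c : A -> R) (b : B -> R)
  (f : A -> B -> R) :=
  [/\ forall a v, 0 <= f a v,
      forall a v, f a v != 0 -> [&& adj a v, a \in SA & v \in SB],
      forall a, \sum_v f a v <= c a &
      forall v, v \in SB -> b v <= \sum_a f a v].

Definition hall_cond (SA : {set A}) (SB : {set B}) (c : A -> R) (b : B -> R) :=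
  forall U : {set B}, U \subset SB ->
    \sum_(v in U) b v <= \sum_(a in SA :&: Nb U) c a.

Lemma sum_ind1 (T : finType) (X : {set T}) (x0 : T) (t : R) :
  \sum_(x in X) ((x == x0)%:R * t) = (x0 \in X)%:R * t.
Proof.
case: (boolP (x0 \in X)) => hx.
  rewrite (bigD1 x0) //= eqxx big1 ?addr0 ?mul1r // => x /andP[_ /negbTE ->].
  by rewrite mul0r.
rewrite big1 ?mul0r // => x xX; case: eqP => [e|]; last by rewrite mul0r.
by rewrite -e xX in hx.
Qed.

Lemma sum_ind1T (T : finType) (x0 : T) (t : R) :
  \sum_x ((x == x0)%:R * t) = t.
Proof.
rewrite (bigD1 x0) //= eqxx big1 ?addr0 ?mul1r // => x /negbTE ->.
by rewrite mul0r.
Qed.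

Lemma bigmin_props (I : finType) (P : pred I) (F : I -> R) (x0 : R) :
  let t := \big[Num.min/x0]_(i | P i) F i in
  [/\ t <= x0, forall i, P i -> t <= F i &
      t = x0 \/ exists2 i, P i & t = F i].
Proof.
move=> t; split.
- rewrite /t; elim/big_rec: _ => // i x _ hx.
  by rewrite ge_min hx orbT.
- move=> i Pi; rewrite /t (bigD1 i) //=.
  by rewrite ge_min lexx.
- rewrite /t; elim/big_rec: _ => [|i x Pi hx]; first by left.
  case: (boolP (F i <= x)) => h.
    by right; exists i => //; rewrite min_l.
  by rewrite min_r // ltW // ltNge h.
Qed.


Lemma combine (SA : {set A}) (SB : {set B}) (c : A -> R) (b : B -> R) a v (t : R) (g : A -> B -> R) : a \in SA -> v \in SB -> adj a v -> 0 <= t ->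
  (forall x y, 0 <= g x y) ->
  (forall x y, g x y != 0 -> [&& adj x y, x \in SA & y \in SB]) ->
  (forall x, \sum_y g x y <= c x - (x == a)%:R * t) ->
  (forall y, y \in SB -> b y - (y == v)%:R * t <= \sum_x g x y) ->
  flow_ok SA SB c b (fun x y => g x y + (x == a)%:R * ((y == v)%:R * t)).
Proof.
move=> aSA vSB avadj t0 g0 gs gc gb; split.
- by move=> x y; rewrite addr_ge0 // mulr_ge0 // mulr_ge0.
- move=> x y /=; case: (eqVneq (g x y) 0) => [->|/gs //].
  rewrite add0r; case: (eqVneq x a) => [->|_]; last by rewrite mul0r eqxx.
  case: (eqVneq y v) => [->|_]; last by rewrite mul0r mulr0 eqxx.
  by rewrite avadj aSA vSB.
- move=> x; rewrite big_split /= -mulr_sumr sum_ind1T.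
  by have := gc x; lra.
- move=> y yS; rewrite big_split /= sum_ind1T.
  by have := gb y yS; lra.
Qed.

Lemma resid_hall (SA : {set A}) (SB : {set B}) (c : A -> R) (b : B -> R) a v (t : R) : a \in SA -> v \in SB ->
  hall_cond SA SB c b -> 0 <= t ->
  (forall U : {set B}, U \subset SB -> v \notin U -> a \in Nb U ->
     t <= \sum_(x in SA :&: Nb U) c x - \sum_(y in U) b y) ->
  hall_cond SA SB (fun x => c x - (x == a)%:R * t) (fun y => b y - (y == v)%:R * t).
Proof.
move=> aSA vSB hH t0 hU U sU.
rewrite !sumrB !sum_ind1.
have := hH U sU.
case: (boolP (a \in SA :&: Nb U)) => haU; case: (boolP (v \in U)) => hvU;
  rewrite /= ?mul1r ?mul0r; try lra.
have := hU U sU hvU; rewrite inE in haU; case/andP: haU => _ haU.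
by move=> /(_ haU); lra.
Qed.

Lemma Nb_sub (W U : {set B}) : W \subset U -> Nb W \subset Nb U.
Proof.
move=> /fintype.subsetP sWU; apply/fintype.subsetP => x; rewrite !inE => /existsP[y /andP[yW h]].
by apply/existsP; exists y; rewrite sWU.
Qed.

Lemma NbU (W U : {set B}) : Nb (W :|: U) = Nb W :|: Nb U.
Proof.
apply/finset.setP => x; rewrite !inE; apply/existsP/orP.
  move=> [y /andP[]]; rewrite inE => /orP[] yin h; [left|right];
  by apply/existsP; exists y; rewrite yin.
by move=> [] /existsP[y /andP[yin h]]; exists y; rewrite inE yin ?orbT.
Qed.

Lemma sum_split_set (T : finType) (X Y : {set T}) (g : T -> R) :
  \sum_(x in X) g x = \sum_(x in X :&: Y) g x + \sum_(x in X :\: Y) g x.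
Proof.
rewrite (bigID (mem Y)) /=; congr (_ + _); apply: eq_bigl => x;
by rewrite !inE // andbC.
Qed.

Lemma sum_setD1_0 (T : finType) (X : {set T}) (g : T -> R) a :
  g a = 0 -> \sum_(x in X :\ a) g x = \sum_(x in X) g x.
Proof.
move=> ga; rewrite [RHS](sum_split_set X [set a]) [X in _ = X + _]big1 ?add0r // => x.
by rewrite !inE => /andP[_ /eqP ->].
Qed.

Lemma zero_out (f : A -> B -> R) (SA : {set A}) (SB : {set B}) x y :
  (forall x y, f x y != 0 -> [&& adj x y, x \in SA & y \in SB]) ->
  (x \notin SA) || (y \notin SB) -> f x y = 0.
Proof.
move=> hs h; apply/eqP; apply: contraTT h => /hs /and3P[_ -> ->] //.
Qed.

Lemma meas_aux (p q n s s' k : nat) :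
  (n.+1 + p <= q)%N -> (s' <= n)%N -> (q + s < k.+1)%N -> (p + s' < k)%N.
Proof. lia. Qed.

Lemma flow_main (k : nat) : forall (SA : {set A}) (SB : {set B}) (c : A -> R) (b : B -> R), (#|SB| * #|A|.+1 + #|SA| < k)%N ->
  (forall x, 0 <= c x) -> hall_cond SA SB c b -> exists f, flow_ok SA SB c b f.
Proof.
elim: k => [//|k IH] SA SB c b hk c0 hH.
have [->|[v vSB]] := set_0Vmem SB.
  exists (fun _ _ => 0); split => //.
  - by move=> x y; rewrite eqxx.
  - by move=> x; rewrite big1.
  - by move=> y; rewrite inE.
have cardSB : #|SB| = #|SB :\ v|.+1 by rewrite (cardsD1 v SB) vSB.
case: (lerP (b v) 0) => bv.
  have [|//|U sU|f [f0 fs fc fb]] := IH SA (SB :\ v) c b.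
  - move: hk; rewrite cardSB mulSn; lia.
  - by apply: hH; apply: fintype.subset_trans sU (finset.subsetDl _ _).
  exists f; split => //.
    move=> x y /fs /and3P[-> -> ]; rewrite inE => /andP[_ ->] //.
  move=> y yS; case: (eqVneq y v) => [->|yv].
    by apply: le_trans bv _; apply: sumr_ge0.
  by apply: fb; rewrite !inE yv.
have := hH [set v]; rewrite finset.sub1set vSB big_set1 => /(_ isT) hv.
have [e|[a]] := set_0Vmem (SA :&: Nb [set v]).
  by move: hv; rewrite e big_set0; lra.
rewrite !inE => /andP[aSA /existsP[y /andP[]]]; rewrite inE => /eqP -> avadj; clear y.
pose P := fun U : {set B} => [&& U \subset SB, v \notin U & a \in Nb U].
pose sl := fun U : {set B} => \sum_(x in SA :&: Nb U) c x - \sum_(y in U) b y.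
pose t := \big[Num.min/Num.min (c a) (b v)]_(U | P U) sl U.
have [tm tU tatt] := bigmin_props P sl (Num.min (c a) (b v)).
rewrite -/t in tm tU tatt.
have sl0 (U : {set B}) : U \subset SB -> 0 <= sl U by move=> /hH; rewrite /sl; lra.
have t0 : 0 <= t.
  case: tatt => [->|[U /and3P[sU _ _] ->]]; last exact: sl0.
  by rewrite le_min c0 ltW.
have tca : t <= c a by apply: le_trans tm _; rewrite ge_min lexx.
have tbv : t <= b v by apply: le_trans tm _; rewrite ge_min lexx orbT.
pose c' := fun x => c x - (x == a)%:R * t.
pose b' := fun y => b y - (y == v)%:R * t.
have hR : hall_cond SA SB c' b'.
  apply: resid_hall => // U sU vU aU; apply: (tU U); rewrite /P sU vU aU.
  done.
have c'0 x : 0 <= c' x.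
  rewrite /c'; case: (eqVneq x a) => [->|]; rewrite ?mul1r ?mul0r; last first.
    by rewrite subr0.
  by rewrite subr_ge0.
suff [g [g0 gs gc gb]] : exists g, flow_ok SA SB c' b' g.
  by eexists; apply: (combine aSA vSB avadj t0 g0 gs gc gb).
have tcases : [\/ t = c a, t = b v | exists2 U, P U & t = sl U].
  case: tatt => [->|[U PU ->]]; last by apply: Or33; exists U.
  by case: (leP (c a) (b v)) => h; [apply: Or31|apply: Or32].
case: tcases => [tc|tb|[U0 /and3P[sU0 vU0 aU0] tsl]].
-
  have cardSA : #|SA| = #|SA :\ a|.+1 by rewrite (cardsD1 a SA) aSA.
  have [|//|U sU|f [f0 fs fc fb]] := IH (SA :\ a) SB c' b'.
  + move: hk; rewrite cardSA; lia.
  + have -> : (SA :\ a) :&: Nb U = (SA :&: Nb U) :\ a.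
      by apply/finset.setP => x; rewrite !inE; case: (x == a); rewrite ?andbF.
    rewrite sum_setD1_0; first exact: hR.
    by rewrite /c' eqxx mul1r tc subrr.
  exists f; split => //.
  move=> x y /fs /and3P[-> ]; rewrite inE => /andP[_ ->] -> //.
-
  have [|//|U sU|f [f0 fs fc fb]] := IH SA (SB :\ v) c' b'.
  + move: hk; rewrite cardSB mulSn; lia.
  + by apply: hR; apply: fintype.subset_trans sU (finset.subsetDl _ _).
  exists f; split => //.
    move=> x y /fs /and3P[-> -> ]; rewrite inE => /andP[_ ->] //.
  move=> y yS; case: (eqVneq y v) => [->|yv].
    by rewrite /b' eqxx mul1r tb subrr; apply: sumr_ge0.
  by apply: fb; rewrite !inE yv.
- (* split along tight set U0 *)
  have aNU0 : a \in SA :&: Nb U0 by rewrite inE aSA.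
  have tight : \sum_(y in U0) b' y = \sum_(x in SA :&: Nb U0) c' x.
    rewrite /b' /c' !sumrB !sum_ind1 aNU0 (negbTE vU0) /= mul0r mul1r subr0.
    by rewrite tsl /sl; lra.
  have U0ne : exists y, y \in U0.
    by move: aU0; rewrite inE => /existsP[y /andP[yU _]]; exists y.
  have pU0 : U0 \proper SB by apply/fintype.properP; split => //; exists v.
  have pSB2 : SB :\: U0 \proper SB.
    apply/fintype.properP; split; first exact: finset.subsetDl.
    case: U0ne => y yU; exists y; first by move/fintype.subsetP: sU0; apply.
    by rewrite inE yU.
  have c1 := fintype.proper_card pU0; have c2 := fintype.proper_card pSB2.
  have cA1 : (#|SA :&: Nb U0| <= #|A|)%N by apply: fintype.max_card.
  have cA2 : (#|SA :\: Nb U0| <= #|A|)%N by apply: fintype.max_card.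
  have [|//|W sW|f1 [f10 f1s f1c f1b]] := IH (SA :&: Nb U0) U0 c' b'.
  + have : (#|U0|.+1 * #|A|.+1 <= #|SB| * #|A|.+1)%N by rewrite leq_mul2r c1 orbT.
    rewrite mulSn => h; exact: (meas_aux h _ hk).
  + have -> : (SA :&: Nb U0) :&: Nb W = SA :&: Nb W.
      by rewrite -finset.setIA; congr (_ :&: _); apply/finset.setIidPr/Nb_sub.
    by apply: hR; apply: fintype.subset_trans sW sU0.
  have [|//|W sW|f2 [f20 f2s f2c f2b]] := IH (SA :\: Nb U0) (SB :\: U0) c' b'.
  + have : (#|SB :\: U0|.+1 * #|A|.+1 <= #|SB| * #|A|.+1)%N.
      by rewrite leq_mul2r c2 orbT.
    rewrite mulSn => h; exact: (meas_aux h _ hk).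
  + have sWU : W :|: U0 \subset SB.
      by rewrite finset.subUset sU0 andbT; apply: fintype.subset_trans sW (finset.subsetDl _ _).
    have := hR _ sWU.
    have dWU y : y \in W -> y \notin U0.
      by move=> /(fintype.subsetP sW); rewrite inE => /andP[].
    rewrite (sum_split_set (W :|: U0) U0).
    have -> : (W :|: U0) :&: U0 = U0 by apply/finset.setIidPr/finset.subsetUr.
    have -> : (W :|: U0) :\: U0 = W.
      apply/finset.setP => y; rewrite !inE; case: (boolP (y \in U0)) => yU; last first.
        by rewrite orbF.
      by rewrite /=; apply/esym/negP => /dWU; rewrite yU.
    rewrite (sum_split_set (SA :&: Nb (W :|: U0)) (Nb U0)).
    have -> : SA :&: Nb (W :|: U0) :&: Nb U0 = SA :&: Nb U0.
      apply/finset.setP => x; rewrite NbU !inE.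
      by case: (x \in SA); case: [exists v0 in U0, adj x v0]; case: [exists v0 in W, adj x v0].
    have -> : SA :&: Nb (W :|: U0) :\: Nb U0 = (SA :\: Nb U0) :&: Nb W.
      apply/finset.setP => x; rewrite NbU !inE.
      by case: (x \in SA); case: [exists v0 in U0, adj x v0]; case: [exists v0 in W, adj x v0].
    by rewrite tight; lra.
  exists (fun x y => f1 x y + f2 x y); split.
  + by move=> x y; rewrite addr_ge0.
  + move=> x y; case: (eqVneq (f1 x y) 0) => [->|/f1s].
      rewrite add0r => /f2s /and3P[-> ]; rewrite !inE => /andP[_ ->] /andP[_ ->] //.
    by move=> /and3P[-> ]; rewrite !inE => /andP[-> _] /(fintype.subsetP sU0) -> _.
  + move=> x; rewrite big_split /=.
    case: (boolP (x \in Nb U0)) => xN.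
      rewrite [X in _ + X]big1 ?addr0 // => y _.
      by apply: (zero_out f2s); rewrite inE xN.
    rewrite [X in X + _]big1 ?add0r // => y _.
    by apply: (zero_out f1s); rewrite inE (negbTE xN) andbF.
  + move=> y yS; rewrite big_split /=.
    case: (boolP (y \in U0)) => yU.
      by apply: le_trans (f1b y yU) _; rewrite lerDl sumr_ge0.
    apply: le_trans (f2b y _) _; first by rewrite inE yU.
    by rewrite lerDr sumr_ge0.
Qed.

Theorem flow_exists (SA : {set A}) (SB : {set B}) (c : A -> R) (b : B -> R) :
  (forall x, 0 <= c x) -> hall_cond SA SB c b -> exists f, flow_ok SA SB c b f.
Proof. by apply: (@flow_main (#|SB| * #|A|.+1 + #|SA|).+1%N). Qed.

End Flow.

Local Open Scope classical_set_scope.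
Local Open Scope fset_scope.
Local Open Scope ring_scope.



Lemma le_from_lt (R : realType) (x y : \bar R) :
  (forall r : R, (r%:E < x)%E -> (r%:E <= y)%E) -> (x <= y)%E.
Proof.
move=> h; case: x h => [s| |] h; last by rewrite leNye.
- case: y h => [t| |] h; last 2 first.
  + by rewrite leey.
  + by have := h (s - 1) ; rewrite lte_fin ltrBlDr ltrDl ltr01 => /(_ isT).
  rewrite lee_fin leNgt; apply/negP => ts.
  have := h ((t + s) / 2); rewrite !lte_fin !lee_fin.
  have -> : (t + s) / 2 < s = true by apply/idP; lra.
  by move=> /(_ isT); lra.
- rewrite leye_eq; apply/eqP; apply: eq_infty => r; apply: h; exact: ltry.
Qed.

Lemma fip_compact (T : topologicalType) (K : set T) (J : choiceType)
    (g : J -> set T) :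
  compact K -> (forall j, closed (g j)) ->
  (forall F : {fset J}, exists x, K x /\ forall j, j \in F -> g j x) ->
  exists x, K x /\ forall j, g j x.
Proof.
move=> Kco gcl hF.
case: (pselect (exists j : J, True)) => [[j0 _]|nJ]; last first.
  have [x [Kx _]] := hF fset0; exists x; split => // j.
  by exfalso; apply: nJ; exists j.
pose f := fun j => (K `&` g j)%classic.
have finIf : finI setT f.
  move=> D _; have [x [Kx hx]] := hF D.
  by exists x => j /= jD; split => //; apply: hx.
have [|p [Kp clp]] := Kco _ (finI_filter finIf).
  by exists (f j0); [apply: finI_from1|move=> ? []].
exists p; split => // j; apply: (gcl j) => B /clp HB.
have /HB : (filter_from (finI_from setT f) id) (f j).
  by exists (f j) => //; apply: finI_from1.
by move=> [x [[_ gx] Bx]]; exists x.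
Qed.

Section Topo.
Import ArrowAsProduct.
Variables (R : realType) (I : choiceType).

Lemma sum_proj_continuous (s : seq I) :
  continuous (fun x : I -> R => \sum_(p <- s) x p).
Proof.
elim: s => [|p s IH].
  have -> : (fun x : I -> R => \sum_(p <- [::]) x p) = fun=> 0.
    by apply: funext => x; rewrite big_nil.
  exact: cst_continuous.
have -> : (fun x : I -> R => \sum_(q <- p :: s) x q) =
    (fun x => x p + \sum_(q <- s) x q).
  by apply: funext => x; rewrite big_cons.
move=> x; apply: (@continuousD _ R^o); last exact: IH.
exact: (@proj_continuous I (fun _ => R) p).
Qed.

Lemma closed_sum_le (s : seq I) (r : R) :
  closed [set x : I -> R | \sum_(p <- s) x p <= r].
Proof.
have h := proj1 (continuous_closedP _) (sum_proj_continuous (s:=s)).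
exact: h _ (@closed_le R r).
Qed.

Lemma closed_sum_ge (s : seq I) (r : R) :
  closed [set x : I -> R | r <= \sum_(p <- s) x p].
Proof.
have h := proj1 (continuous_closedP _) (sum_proj_continuous (s:=s)).
exact: h _ (@closed_ge R r).
Qed.

Lemma box_compact : compact [set x : I -> R | forall p, 0 <= x p <= 1].
Proof.
have := @tychonoff I (fun _ => R) (fun _ => `[0, 1]%classic)
  (fun _ => @segment_compact R 0 1).
congr compact; apply/seteqP; split => x /= h p; have := h p;
by rewrite /= in_itv.
Qed.
End Topo.

Section Main.
Variables (R : realType) (X : Type) (Y : choiceType) (n : nat).
Variables (H : set (X -> Y)) (S : 'I_n -> X).
Local Notation V := (agV Y n).
Local Notation d := (agdist R H S).

Definition ratio (U : {fset V}) : \bar R :=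
  ((((num_edges_touching U)%:R)%:E + \sum_(u <- U) d u) *
   ((#|` U|%:R)^-1)%:E)%E.

Lemma d_ge0 (v : V) : (0 <= d v)%E.
Proof. by apply: le_ereal_inf_tmp => _ [h _ <-]; rewrite lee_fin ler0n. Qed.

Lemma key_fst (i : 'I_n) (v : V) : (edge_key i v).1 = i.
Proof. by []. Qed.

Lemma key_agupd (i : 'I_n) (v : V) (y : Y) : edge_key i (agupd v i y) = edge_key i v.
Proof.
rewrite /edge_key; congr (_, _); apply/ffunP => j; rewrite !ffunE.
by case: eqP => // /eqP ji; rewrite /agupd ffunE (negbTE ji).
Qed.

Lemma key_eq_agupd (i : 'I_n) (u w : V) : edge_key i u = edge_key i w -> u = agupd w i (u i).
Proof.
move=> [] /ffunP e; apply/ffunP => j; rewrite /agupd ffunE.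
case: eqP => [->//|/eqP ji]; have := e j; rewrite !ffunE (negbTE ji).
by case.
Qed.

Lemma agupd_at (v : V) (i : 'I_n) (y : Y) : agupd v i y i = y.
Proof. by rewrite /agupd ffunE eqxx. Qed.

Lemma agupd_id (w : V) (i : 'I_n) : agupd w i (w i) = w.
Proof. by apply/ffunP => j; rewrite /agupd ffunE; case: eqP => // ->. Qed.

Lemma sum_le_esum (T : choiceType) (a : T -> \bar R) (r : seq T) : uniq r ->
  (\sum_(y <- r) a y <= \esum_(y in [set: T]) a y)%E.
Proof.
move=> ur; apply: esum_ge; exists [set` r]; first by split; [exact: finite_seq|].
by rewrite fsbig_seq.
Qed.

Lemma sum_ind1T' (T : finType) (x0 : T) (t : R) :
  \sum_x ((x == x0)%:R * t) = t.
Proof.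
rewrite (bigD1 x0) //= eqxx big1 ?addr0 ?mul1r // => x /negbTE ->.
by rewrite mul0r.
Qed.

Lemma sum_ind1T_dep (T : finType) (x0 : T) (g : T -> R) :
  \sum_x ((x == x0)%:R * g x) = g x0.
Proof.
rewrite (bigD1 x0) //= eqxx big1 ?addr0 ?mul1r // => x /negbTE ->.
by rewrite mul0r.
Qed.

Lemma sum_ind_seq (T : eqType) (r : seq T) (x0 : T) (t : R) :
  uniq r -> x0 \in r -> \sum_(x <- r) ((x == x0)%:R * t) = t.
Proof.
move=> ur xr; rewrite (bigD1_seq x0) //= eqxx mul1r big1 ?addr0 // => x.
by move=> /negbTE ->; rewrite mul0r.
Qed.

Lemma edge_bound (o : 'I_n -> V -> R) (U : {fset V}) (k : 'I_n * {ffun 'I_n -> option Y}) :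
  rand_orientation o ->
  \sum_(u <- U) \sum_i ((k == edge_key i u)%:R * o i u) <= 1.
Proof.
move=> [o0 o1].
have E : forall u, \sum_i ((k == edge_key i u)%:R * o i u) =
    (k == edge_key k.1 u)%:R * o k.1 u.
  move=> u; rewrite -[RHS](sum_ind1T' k.1); apply: eq_bigr => i _.
  case: (eqVneq i k.1) => [->|ik]; [by rewrite mul1r|rewrite mul0r].
  case: (eqVneq k (edge_key i u)) => [e|]; last by rewrite mul0r.
  by move: ik; rewrite e key_fst eqxx.
rewrite (eq_bigr _ (fun u _ => E u)).
set i0 := k.1.
case: (boolP [exists u : U, k == edge_key i0 (val u)]) => [/existsP[u0 ku0]|nk];
  last first.
  rewrite big1_fset // => u uU _.
  case: (eqVneq k (edge_key i0 u)) => [e|]; last by rewrite mul0r.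
  by move/negP: nk; case; apply/existsP; exists [` uU]; rewrite e.
rewrite (bigID (fun u => k == edge_key i0 u)) /= [X in _ + X]big1 ?addr0; last first.
  by move=> u /negbTE ->; rewrite mul0r.
rewrite -big_filter.
have -> : \sum_(u <- [seq u <- U | k == edge_key i0 u]) ((k == edge_key i0 u)%:R * o i0 u)
   = \sum_(u <- [seq u <- U | k == edge_key i0 u]) o i0 (agupd (val u0) i0 (u i0)).
  rewrite big_seq [RHS]big_seq; apply: eq_bigr => u; rewrite mem_filter.
  move=> /andP[/eqP ku _]; rewrite ku eqxx mul1r; congr (o _ _).
  by apply: key_eq_agupd; rewrite -ku; apply/eqP.
rewrite -(big_map (fun u : V => u i0) xpredT (fun y => o i0 (agupd (val u0) i0 y))).
have us : uniq (map (fun u : V => u i0) [seq u <- U | k == edge_key i0 u]).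
  rewrite map_inj_in_uniq ?filter_uniq ?fset_uniq // => u w.
  rewrite !mem_filter => /andP[/eqP ku _] /andP[/eqP kw _] e.
  have kuw : edge_key i0 u = edge_key i0 w by rewrite -ku -kw.
  by rewrite (key_eq_agupd kuw) e agupd_id.
rewrite -lee_fin -sumEFin -(o1 i0 (val u0)); exact: sum_le_esum.
Qed.

Lemma indeg_sum_le (o : 'I_n -> V -> R) (U : {fset V}) :
  rand_orientation o ->
  \sum_(u <- U) indegree o u <= (num_edges_touching U)%:R.
Proof.
move=> ro; rewrite /num_edges_touching.
set KE := [fset edge_key i v | i in [fset i | i in 'I_n], v in U].
have -> : \sum_(u <- U) indegree o u =
    \sum_(u <- U) \sum_i \sum_(k <- KE) ((k == edge_key i u)%:R * o i u).
  rewrite big_seq [RHS]big_seq; apply: eq_bigr => u uU.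
  apply: eq_bigr => i _; rewrite sum_ind_seq ?fset_uniq //.
  by apply/imfset2P; exists i; rewrite ?inE //; exists u.
rewrite (eq_bigr (fun u => \sum_(k <- KE) \sum_i ((k == edge_key i u)%:R * o i u)));
  last by move=> u _; rewrite exchange_big.
rewrite exchange_big /= -sum1_size natr_sum.
by apply: ler_sum => k _; apply: edge_bound.
Qed.

Lemma part1 (a : R) : ag_orientable H S a ->
  forall U : {fset V}, U != fset0 -> (a%:E <= ratio U)%E.
Proof.
move=> [o [ro hind]] U U0.
have cU : (0 < #|` U|)%N by rewrite cardfs_gt0.
have cUR : 0 < (#|` U|%:R : R) by rewrite ltr0n.
case: (boolP [exists u : U, d (val u) == +oo%E]) => [/existsP[u0 /eqP du0]|nd].
  have : (\sum_(u <- U) d u = +oo)%E.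
    apply/eqP; rewrite -leye_eq -du0 (bigD1_seq (val u0)) ?fset_uniq ?fsvalP //=.
    rewrite leeDl // sume_ge0 // => *; exact: d_ge0.
  by move=> hs; rewrite /ratio hs addey // gt0_mulye ?leey // lte_fin invr_gt0.
have dE : forall u, u \in U -> d u = (fine (d u))%:E.
  move=> u uU; have := d_ge0 u; case E: (d u) => [r| |] // _.
  by case/negP: nd; apply/existsP; exists [` uU]; rewrite /= E.
rewrite /ratio big_seq (eq_bigr (fun u => (fine (d u))%:E)); last first.
  by move=> u uU; rewrite -dE.
rewrite -big_seq sumEFin -EFinD -EFinM lee_fin ler_pdivlMr //.
have hu : forall u, u \in U -> a - fine (d u) <= indegree o u.
  move=> u uU; have := hind u; rewrite dE // -EFinB lee_fin; exact.
have := indeg_sum_le U ro.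
have : \sum_(u <- U) (a - fine (d u)) <= \sum_(u <- U) indegree o u.
  by rewrite big_seq [X in _ <= X]big_seq; apply: ler_sum => u uU; apply: hu.
rewrite sumrB big_const_seq count_predT.
have -> : iter (size U) (+%R a) 0 = a * #|` U|%:R.
  by rewrite -/(_ *+ _) [RHS]mulr_natr; elim: (size U) => //= m ->; rewrite mulrS.
lra.
Qed.

Lemma agupd_agupd (v : V) (i : 'I_n) (y y' : Y) :
  agupd (agupd v i y) i y' = agupd v i y'.
Proof.
by apply/ffunP => j; rewrite /agupd !ffunE; case: eqP.
Qed.

Lemma esum_le1 (f : Y -> R) : (forall s : seq Y, uniq s -> \sum_(y <- s) f y <= 1) ->
  (\esum_(y in [set: Y]) (f y)%:E <= 1)%E.
Proof.
move=> h; apply: ge_ereal_sup => _ [Z [finZ _] <-].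
rewrite fsbig_finite // sumEFin lee_fin; apply: h; exact: fset_uniq.
Qed.

Lemma fixup (b : R) (x : 'I_n -> V -> R) : (forall i v, 0 <= x i v) ->
  (forall i v (s : seq Y), uniq s -> \sum_(y <- s) x i (agupd v i y) <= 1) ->
  (forall v, (b%:E - d v <= (\sum_i x i v)%:E)%E) -> ag_orientable H S b.
Proof.
move=> x0 x1 xd.
case: (pselect (exists y : Y, True)) => [[y0 _]|nY]; last first.
  exists x; split => //; split=> // i v.
  by exfalso; apply: nY; exists (v i).
pose es i v := (\esum_(y in [set: Y]) (x i (agupd v i y))%:E)%E.
have es0 i v : (0 <= es i v)%E by apply: esum_ge0 => y _; rewrite lee_fin.
have es1 i v : (es i v <= 1)%E by apply: esum_le1 => s us; apply: x1.
pose sv i v := fine (es i v).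
have esE i v : es i v = (sv i v)%:E.
  by have := es0 i v; have := es1 i v; rewrite /sv; case: (es i v).
have sv01 i v : 0 <= sv i v <= 1.
  by rewrite -!lee_fin -esE es0 es1.
have svU i v y : sv i (agupd v i y) = sv i v.
  rewrite /sv /es; congr fine; apply: eq_esum => y' _.
  by rewrite agupd_agupd.
pose o i v := x i v + (1 - sv i v) * (v i == y0)%:R.
exists o; split; first split.
- move=> i v; rewrite /o addr_ge0 // mulr_ge0 //.
  by case/andP: (sv01 i v) => _; rewrite subr_ge0.
- move=> i v; rewrite /o.
  under eq_esum do rewrite EFinD svU agupd_at.
  rewrite esumD; last 2 first.
  + by move=> y _; rewrite lee_fin.
  + move=> y _; rewrite lee_fin mulr_ge0 //.
    by case/andP: (sv01 i v) => _; rewrite subr_ge0.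
  rewrite -/(es i v) esE (esumID [set y0]); last first.
    move=> y _; rewrite lee_fin mulr_ge0 //.
    by case/andP: (sv01 i v) => _; rewrite subr_ge0.
  rewrite setTI esum_set1; last first.
    by rewrite eqxx mulr1 lee_fin; case/andP: (sv01 i v) => _; rewrite subr_ge0.
  rewrite esum1 ?adde0; last first.
    by move=> y [_ /= /eqP /negbTE ->]; rewrite mulr0.
  by rewrite eqxx mulr1 -EFinD addrC subrK.
- move=> v; apply: le_trans (xd v) _; rewrite lee_fin /indegree.
  apply: ler_sum => i _; rewrite /o lerDl mulr_ge0 //.
  by case/andP: (sv01 i v) => _; rewrite subr_ge0.
Qed.

Section CompactStep.
Import ArrowAsProduct.

Lemma compact_step (b : R) :
  (forall F : {fset V}, exists x : 'I_n -> V -> R,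
    [/\ forall i v, 0 <= x i v,
        forall i v (s : seq Y), uniq s -> \sum_(y <- s) x i (agupd v i y) <= 1 &
        forall v, v \in F -> (b%:E - d v <= (\sum_i x i v)%:E)%E]) ->
  exists x : 'I_n -> V -> R,
    [/\ forall i v, 0 <= x i v,
        forall i v (s : seq Y), uniq s -> \sum_(y <- s) x i (agupd v i y) <= 1 &
        forall v, (b%:E - d v <= (\sum_i x i v)%:E)%E].
Proof.
move=> hF.
pose vs (v : V) := [seq (i, v) | i <- enum 'I_n].
pose es (i : 'I_n) (v : V) (s : seq Y) := [seq (i, agupd v i y) | y <- s].
pose g (j : (V + ('I_n * V * seq Y))%type) : set ('I_n * V -> R) :=
  match j with
  | inl v => match d v with
             | r%:E => [set x | b - r <= \sum_(p <- vs v) x p]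
             | +oo%E => setT
             | -oo%E => set0
             end
  | inr (i, v, s) => if uniq s then [set x | \sum_(p <- es i v s) x p <= 1]
                     else setT
  end.
have gcl : forall j, closed (g j).
  case => [v|[[i v] s]] /=.
    case: (d v) => [r| |]; [exact: closed_sum_ge|exact: closedT|exact: closed0].
  case: (uniq s); [exact: closed_sum_le|exact: closedT].
have sumvs (x : 'I_n -> V -> R) v :
    \sum_(p <- vs v) (fun p => x p.1 p.2) p = \sum_i x i v.
  by rewrite big_map big_enum.
have sumes (x : 'I_n -> V -> R) i v s :
    \sum_(p <- es i v s) (fun p => x p.1 p.2) p = \sum_(y <- s) x i (agupd v i y).
  by rewrite big_map.
have := fip_compact (@box_compact R ('I_n * V)%type) gcl.
case.
- move=> D.
  pose F := [fset v in pmap (fun j => if j is inl v then Some v else None) D].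
  have [x [x0 x1 xd]] := hF F.
  exists (fun p => x p.1 p.2); split.
    move=> [i v] /=; rewrite x0 /=.
    have := x1 i v [:: v i] isT; rewrite big_seq1 agupd_id; exact.
  case => [v|[[i v] s]] jD /=.
    have vF : v \in F.
      rewrite inE; rewrite mem_pmap; apply/mapP; exists (inl v) => //.
    have := xd v vF; rewrite -(sumvs x v).
    case: (d v) => [r| |] //; rewrite ?lee_fin //.
  case us: (uniq s) => //=; rewrite sumes; exact: x1.
- move=> x [Kx gx]; exists (fun i v => x (i, v)); split.
  + by move=> i v; case/andP: (Kx (i, v)).
  + move=> i v s us; have := gx (inr (i, v, s)); rewrite /= us.
    by rewrite /= big_map.
  + move=> v; have := gx (inl v); rewrite /g; have := d_ge0 v.
    case: (d v) => [r| |] //= _; last by rewrite addeNy leNye.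
    by rewrite /vs big_map big_enum /= lee_fin.
Qed.

End CompactStep.

Lemma ratio_real (be : R) (U : {fset V}) : U != fset0 ->
  (forall v, v \in U -> d v != +oo%E) -> (be%:E <= ratio U)%E ->
  \sum_(v <- U) (be - fine (d v)) <= (num_edges_touching U)%:R.
Proof.
move=> U0 nd.
have cU : (0 < #|` U|)%N by rewrite cardfs_gt0.
have cUR : 0 < (#|` U|%:R : R) by rewrite ltr0n.
have dE : forall u, u \in U -> d u = (fine (d u))%:E.
  move=> u uU; have := d_ge0 u; have := nd u uU.
  by case: (d u).
rewrite /ratio big_seq (eq_bigr (fun u => (fine (d u))%:E)); last first.
  by move=> u uU; rewrite -dE.
rewrite -big_seq sumEFin -EFinD -EFinM lee_fin ler_pdivlMr //.
rewrite sumrB big_const_seq count_predT.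
have -> : iter (size U) (+%R be) 0 = be * #|` U|%:R.
  by rewrite -/(_ *+ _) [RHS]mulr_natr; elim: (size U) => //= m ->; rewrite mulrS.
lra.
Qed.

Lemma cnt_bound (s : seq Y) (v w : V) (i : 'I_n) : uniq s ->
  \sum_(y <- s) (w == agupd v i y)%:R <= 1 :> R.
Proof.
move=> us.
case: (boolP (has (fun y => w == agupd v i y) s)) => [/hasP [y0 y0s /eqP e]|].
  rewrite (eq_bigr (fun y => (y == y0)%:R * 1)); first by rewrite sum_ind_seq.
  have inj : injective (agupd v i).
    by move=> a a' h; have := congr1 (fun u : V => u i) h; rewrite !agupd_at.
  by move=> y _; rewrite mulr1 e (inj_eq inj) eq_sym.
move/hasPn => hn; rewrite big1_seq ?ler01 // => y /andP[_ ys].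
by rewrite (negbTE (hn y ys)).
Qed.

Lemma finite_stage (b : R) :
  (forall U : {fset V}, U != fset0 -> (b%:E <= ratio U)%E) ->
  forall F : {fset V}, exists x : 'I_n -> V -> R,
    [/\ forall i v, 0 <= x i v,
        forall i v (s : seq Y), uniq s -> \sum_(y <- s) x i (agupd v i y) <= 1 &
        forall v, v \in F -> (b%:E - d v <= (\sum_i x i v)%:E)%E].
Proof.
move=> hyp F.
pose KE : {fset ('I_n * {ffun 'I_n -> option Y})} :=
  [fset edge_key i v | i in [fset i | i in 'I_n], v in F].
pose adj := fun (k : KE) (u : F) => val k == edge_key (val k).1 (val u).
pose b0 := fun v : V => match d v with r%:E => b - r | _ => 0 end.
have hall : hall_cond adj [set: KE]%SET [set: F]%SET (fun _ => 1) (fun u : F => b0 (val u)).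
  move=> U _.
  rewrite (bigID (fun u => 0 < b0 (val u))) /=.
  have neg : \sum_(u in U | ~~ (0 < b0 (val u))) b0 (val u) <= 0.
    by apply: sumr_le0 => u /andP[_]; rewrite -leNgt.
  suff h : \sum_(u in U | 0 < b0 (val u)) b0 (val u) <=
           \sum_(a in [set: KE]%SET :&: Nb adj U) (1 : R) by lra.
  pose P := fun v : V => if (insub v : option F) is Some u then (u \in U) && (0 < b0 v)
                         else false.
  pose U' := [fset v in F | P v].
  have eq1 : \sum_(u in U | 0 < b0 (val u)) b0 (val u) = \sum_(v <- U') b0 v.
    rewrite /U' -big_fset_condE big_seq_fsetE /=.
    by apply: eq_bigl => u; rewrite /P valK.
  rewrite eq1.
  have RHSE : \sum_(a in [set: KE]%SET :&: Nb adj U) (1 : R) = #|Nb adj U|%:R.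
    by rewrite finset.setTI sumr_const.
  rewrite RHSE.
  have [->|U0] := eqVneq U' fset0; first by rewrite big_seq_fset0 ler0n.
  have U'P v : v \in U' -> exists2 u : F, val u = v & (u \in U) && (0 < b0 v).
    rewrite /U' !inE => /andP[vF]; rewrite /P.
    by case: insubP => [u _ vu|//] h; exists u.
  have nd v : v \in U' -> d v != +oo%E.
    move=> /U'P [u _ /andP[_]]; rewrite /b0.
    by case: (d v) => //; rewrite ltxx.
  have b0E v : v \in U' -> b0 v = b - fine (d v).
    move=> /nd; rewrite /b0; have := d_ge0 v; case: (d v) => //.
  rewrite big_seq (eq_bigr (fun v => b - fine (d v))) -?big_seq; last first.
    by move=> v /b0E.
  apply: le_trans (ratio_real U0 nd (hyp _ U0)) _.
  rewrite ler_nat /num_edges_touching.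
  apply: (@leq_trans #|` [fset val k | k in Nb adj U]|).
    apply: fsubset_leq_card; apply/fsubsetP => k /imfset2P [i _ [v vU' ->]].
    have [u vu /andP [uU _]] := U'P v vU'.
    have kin : edge_key i v \in KE.
      apply/imfset2P; exists i; rewrite ?inE //; exists v => //.
      by rewrite -vu fsvalP.
    apply/imfsetP; exists [` kin] => //.
    rewrite inE; apply/existsP; exists u; rewrite uU /adj /= -vu ?key_fst eqxx.
    done.
  rewrite card_imfset; last exact: val_inj.
  rewrite cardE; apply/eq_leq; apply: perm_size; apply: uniq_perm.
  - exact: enum_finmem_uniq.
  - exact: enum_uniq.
  - by move=> k; rewrite enum_finmemE.
have [f [f0 fs fc fb]] := @flow_exists R _ _ adj [set: KE]%SET [set: F]%SET (fun _ => 1)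
  (fun u => b0 (val u)) (fun _ => ler01) hall.
pose x := fun (i : 'I_n) (w : V) => \sum_(u : F)
  ((val u == w)%:R * \sum_(k : KE) ((val k == edge_key i w)%:R * f k u)).
exists x; split.
- move=> i w; apply: sumr_ge0 => u _; apply: mulr_ge0 => //.
  by apply: sumr_ge0 => k _; apply: mulr_ge0.
- move=> i v s us; pose k0 := edge_key i v.
  pose G := fun u : F => \sum_(k : KE) ((val k == k0)%:R * f k u).
  have G0 u : 0 <= G u by apply: sumr_ge0 => k _; apply: mulr_ge0.
  have xE y : x i (agupd v i y) = \sum_(u : F) ((val u == agupd v i y)%:R * G u).
    by rewrite /x key_agupd.
  rewrite (eq_bigr _ (fun y _ => xE y)) exchange_big /=.
  apply: (@le_trans _ _ (\sum_(u : F) G u)).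
    apply: ler_sum => u _; rewrite -mulr_suml; apply: ler_piMl => //.
    exact: cnt_bound.
  rewrite /G exchange_big /=.
  apply: (@le_trans _ _ (\sum_(k : KE) (val k == k0)%:R)).
    by apply: ler_sum => k _; rewrite -mulr_sumr; apply: ler_piMr => //; exact: fc.
  case: (boolP (k0 \in KE)) => kin.
    rewrite (eq_bigr (fun k => (k == [` kin])%:R * 1)); first by rewrite sum_ind1T'.
    by move=> k _; rewrite mulr1 -val_eqE.
  rewrite big1 ?ler01 // => k _; case: eqP => // e.
  by move: kin; rewrite -e fsvalP.
- move=> v vF; pose u := [` vF] : F.
  have xE i : x i v = \sum_(k : KE) ((val k == edge_key i v)%:R * f k u).
    rewrite /x (eq_bigr (fun u' => (u' == u)%:R * 
       \sum_(k : KE) ((val k == edge_key i v)%:R * f k u'))).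
      by rewrite sum_ind1T_dep.
    by move=> u' _; rewrite -val_eqE.
  rewrite (eq_bigr _ (fun i _ => xE i)) exchange_big /=.
  have kE k : \sum_i ((val k == edge_key i v)%:R * f k u) = f k u.
    case: (eqVneq (f k u) 0) => [->|/fs /and3P[ak _ _]].
      by rewrite big1 // => i _; rewrite mulr0.
    rewrite -[RHS](sum_ind1T' (val k).1); apply: eq_bigr => i _.
    case: (eqVneq i (val k).1) => [->|ik]; first by move: ak; rewrite /adj /= => ->; rewrite mul1r.
    rewrite mul0r; case: eqP => [e|]; last by rewrite mul0r.
    by move: ik; rewrite e key_fst eqxx.
  rewrite (eq_bigr _ (fun k _ => kE k)).
  have := fb u (finset.in_setT u); rewrite /b0 /=.
  have := d_ge0 v; case: (d v) => [r| |] //= _; last by rewrite addeNy leNye.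
Qed.

Lemma part2 (b : R) : (forall U : {fset V}, U != fset0 -> (b%:E <= ratio U)%E) ->
  ag_orientable H S b.
Proof.
move=> hyp; have [x [x0 x1 xd]] := compact_step (finite_stage hyp).
exact: fixup x0 x1 xd.
Qed.

Theorem main :
  hall_ag R H S =
  ereal_sup [set alpha%:E | alpha in [set alpha : R | ag_orientable H S alpha]].
Proof.
apply/eqP; rewrite eq_le; apply/andP; split.
- apply: le_from_lt => r hr; apply: ereal_sup_ubound; exists r => //.
  apply: part2 => U U0; apply: le_trans (ltW hr) _.
  by apply: ereal_inf_lbound; exists U.
- apply: ge_ereal_sup => _ [a ha <-].
  by apply: le_ereal_inf_tmp => _ [U U0 <-]; apply: part1.
Qed.
End Main.

Local Close Scope fset_scope.
Unset Implicit Arguments.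

Theorem propositionF1 (R : realType) (X : Type) (Y : choiceType) (n : nat)
    (H : set (X -> Y)) (S : 'I_n -> X) :
  hall_ag R H S =
  ereal_sup [set alpha%:E | alpha in [set alpha : R | ag_orientable H S alpha]].
Proof. exact: main. Qed.
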